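(* In the setting below, if a PHB $\mathbf{E}$ is $\Delta^-$-stable but $\Delta^+$-unstable, then it can be expressed uniquely as a nonsplit extension of PHBs $0\to\mathbf{L}^+\to\mathbf{E}\to\mathbf{L}^-\to0$, where $\mathbf{L}^\pm$ are parabolic Higgs line bundles with discrete data $S$ and $S^c$ respectively. Conversely, any such extension is $\Delta^-$-stable but $\Delta^+$-unstable.
   Context: Fix distinct $x_1,\dots,x_n\in\mathbb{C}\mathbb{P}^1$. Weights $\beta=(\beta_1(x_i),\beta_2(x_i))_i$ with $0\le\beta_1(x_i)<\beta_2(x_i)<1$ form the weight space $Q$; $\varepsilon_T(\alpha)=\sum_{i\in T}\alpha_i-\sum_{i\notin T}\alpha_i$ for $\alpha=\beta_2-\beta_1$. Walls: intersections of $Q$ with hyperplanes $\varepsilon_T(\beta_2-\beta_1)=0$; chambers: components of the complement. Throughout, PHBs are rank-2 parabolic Higgs bundles $(E,\Phi)$ over $\mathbb{C}\mathbb{P}^1$ which are trivial as holomorphic bundles, with fixed determinant and trace-free Higgs field ($E$ has a line $E_{x_i,2}\subset E_{x_i}$ at each $x_i$ with weights $\beta_1(x_i)<\beta_2(x_i)$; $\Phi$ a meromorphic $\mathrm{End}_0(E)\otimes K_{\mathbb{C}\mathbb{P}^1}$-valued section with at most simple poles at the $x_i$, residues mapping $E_{x_i}$ into $E_{x_i,2}$ and killing $E_{x_i,2}$), and parabolic Higgs line bundles are holomorphically trivial. A parabolic Higgs line bundle has at each $x_i$ weight $\beta_1(x_i)$ or $\beta_2(x_i)$; its discrete data is the set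 of $i$ with weight $\beta_2(x_i)$ (for a subbundle $L\subset E$, $\{i:L_{x_i}=E_{x_i,2}\}$; quotients get complementary weights). $(E,\Phi)$ is $\beta$-stable iff every $\Phi$-invariant line subbundle $L$ with discrete data $S_L$ has $\varepsilon_{S_L}(\beta_2-\beta_1)<0$. Fix a point of $Q$ on exactly one wall $W$, with adjacent chambers $\Delta^\pm$, and let $S$ be the index set of $W$ normalized so that $\varepsilon_S(\beta_2-\beta_1)>0$ on $\Delta^+$; $\Delta^\pm$-stable means stable for weights in $\Delta^\pm$. *)

(* Defs.v *)
From HB Require Import structures.
From mathcomp Require Import all_boot all_order all_algebra.
From mathcomp Require Import all_classical all_reals all_analysis.
From mathcomp Require Import complex.
Import numFieldTopology.Exports.

Set Implicit Arguments.
Unset Strict Implicit.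
Unset Printing Implicit Defensive.

Import Order.TTheory GRing.Theory Num.Theory.
Local Open Scope ring_scope.
Local Open Scope classical_set_scope.

Notation weight R n := ('rV[R]_n * 'rV[R]_n)%type.

Section PHB.
Variables (R : realType) (n : nat).
Local Notation C := (complex R).

(* A weight vector beta = (beta_1, beta_2), each a row vector indexed by the
   marked points x_0, ..., x_{n-1}. *)
Local Notation weight := (weight R n).

Definition eps (T : {set 'I_n}) (a : 'rV[R]_n) : R :=
  \sum_(i in T) a ord0 i - \sum_(i in ~: T) a ord0 i.

Definition alpha (b : weight) : 'rV[R]_n := b.2 - b.1.

Definition Qspace : set weight :=
  [set b : weight | forall i : 'I_n, 0 <= b.1 ord0 i /\ b.1 ord0 i < b.2 ord0 i /\ b.2 ord0 i < 1].

Definition wall (T : {set 'I_n}) : set weight :=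
  Qspace `&` [set b : weight | eps T (alpha b) = 0].

Definition Qreg : set weight :=
  Qspace `&` [set b : weight | forall T : {set 'I_n}, ~ wall T b].

Definition chamber (D : set weight) : Prop :=
  exists2 p, Qreg p & D = connected_component Qreg p.

(* Row vectors in C^2; endomorphisms act on the right: v |-> v *m A.
   The flag line E_{x_i,2} is spanned by flag i; res i is the residue of Phi
   at x_i.  Phi = sum_i res i dz/(z - x i). *)
Record PHB (x : 'I_n -> C) := MkPHB {
  flag : 'I_n -> 'rV[C]_2;
  res : 'I_n -> 'M[C]_2;
  flag_nz : forall i, flag i != 0;
  res_img : forall i, (res i <= flag i)%MS;
  res_ker : forall i, flag i *m res i = 0;
  res_tr  : forall i, \tr (res i) = 0;
  res_sum : \sum_i res i = 0                  (* holomorphic at infinity (as a K-valued section) *)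
}.

Variable x : 'I_n -> C.

Definition Higgs (E : PHB x) (z : C) : 'M[C]_2 :=
  \sum_i (z - x i)^-1 *: res E i.

Definition invariant (E : PHB x) (v : 'rV[C]_2) : Prop :=
  forall z : C, (forall i, z != x i) -> (v *m Higgs E z <= v)%MS.

Definition sub_data (E : PHB x) (v : 'rV[C]_2) : {set 'I_n} :=
  [set i | (v == flag E i)%MS].
Definition quot_data (E : PHB x) (v : 'rV[C]_2) : {set 'I_n} :=
  [set i | ~~ (v == flag E i)%MS].

Definition stable (b : weight) (E : PHB x) : Prop :=
  forall v : 'rV[C]_2, v != 0 -> invariant E v -> eps (sub_data E v) (alpha b) < 0.

(* A splitting of 0 -> L -> E -> E/L -> 0 (L spanned by v) as PHBs: a
   (constant) section w of E mapping to a generator of E/L, which is a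
   parabolic morphism (w in E_{x_i,2} wherever E/L has weight beta_2(x_i))
   and commutes with the Higgs fields (w spans a Phi-invariant line). *)
Definition splitting (E : PHB x) (v w : 'rV[C]_2) : Prop :=
  [/\ ~~ (w <= v)%MS,
      (forall i, i \in quot_data E v -> (w <= flag E i)%MS)
    & invariant E w].

(* E is a nonsplit extension 0 -> L^+ -> E -> L^- -> 0 with L^+ = <v> having
   discrete data S and L^- = E/<v> having discrete data S^c. *)
Definition nonsplit_ext (E : PHB x) (S : {set 'I_n}) (v : 'rV[C]_2) : Prop :=
  [/\ v != 0, invariant E v, sub_data E v = S, quot_data E v = ~: S
    & forall w, ~ splitting E v w].

End PHB.

(* Main.v *)
Require Import Defs.
From HB Require Import structures.
From mathcomp Require Import all_boot all_order all_algebra.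
From mathcomp Require Import all_classical all_reals all_analysis.
From mathcomp Require Import complex.
Import numFieldTopology.Exports.
Import Order.TTheory GRing.Theory Num.Theory.
Local Open Scope ring_scope.
Local Open Scope classical_set_scope.

Lemma cont_sum (R : realType) (T : topologicalType) (I : Type) (r : seq I) (P : pred I)
  (F : I -> T -> R) : (forall i, continuous (F i)) ->
  continuous (fun b => \sum_(i <- r | P i) F i b).
Proof.
move=> HF; elim: r => [|i r IH].
  under eq_fun do rewrite big_nil. exact: cst_continuous.
under eq_fun do rewrite big_cons.
case: (P i).
  move=> t; apply: cvgD; [exact: HF | exact: IH].
exact: IH.
Qed.

Lemma cont_coord (R : realType) (n : nat) (k : 'I_n) :
  continuous (fun b : weight R n => b.1 ord0 k) /\ continuous (fun b : weight R n => b.2 ord0 k).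
Proof.
split=> b.
  apply: (@continuous_comp _ _ _ fst (fun M : 'rV[R]_n => M ord0 k)).
    exact: cvg_fst.
  exact: coord_continuous.
apply: (@continuous_comp _ _ _ snd (fun M : 'rV[R]_n => M ord0 k)).
  exact: cvg_snd.
exact: coord_continuous.
Qed.

Lemma cont_alpha (R : realType) (n : nat) (k : 'I_n) :
  continuous (fun b : weight R n => (b.2 - b.1) ord0 k).
Proof.
have -> : (fun b : weight R n => (b.2 - b.1) ord0 k) =
   ((fun b : weight R n => b.2 ord0 k) - (fun b : weight R n => b.1 ord0 k)).
  by apply: funext => b; rewrite !mxE.
move=> c; apply: continuousB; [exact: (proj2 (cont_coord _ _ k) c) | exact: (proj1 (cont_coord _ _ k) c)].
Qed.

Lemma cont_eps (R : realType) (n : nat) (T : {set 'I_n}) :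
  continuous (fun b : weight R n => eps T (alpha b)).
Proof.
rewrite /eps /alpha.
have -> : (fun b : weight R n => \sum_(i in T) (b.2 - b.1) ord0 i - \sum_(i in ~: T) (b.2 - b.1) ord0 i) =
  (fun b : weight R n => \sum_(i in T) (b.2 - b.1) ord0 i) - (fun b : weight R n => \sum_(i in ~: T) (b.2 - b.1) ord0 i) by [].
move=> c; apply: continuousB; apply: cont_sum => k; exact: cont_alpha.
Qed.

Definition sg (n : nat) (R : realType) (T : {set 'I_n}) (k : 'I_n) : R :=
  if k \in T then 1 else -1.

Lemma epsE (R : realType) n (T : {set 'I_n}) (a : 'rV[R]_n) :
  eps T a = \sum_k sg n R T k * a ord0 k.
Proof.
rewrite /eps (big_mkcond (fun i => i \in T)) (big_mkcond (fun i => i \in ~: T)) /=.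
rewrite -sumrB; apply: eq_bigr => k _; rewrite /sg !inE.
by case: (k \in T) => /=; rewrite ?mul1r ?mulN1r ?subr0 ?sub0r.
Qed.

Lemma epsD (R : realType) n (T : {set 'I_n}) (a c : 'rV[R]_n) :
  eps T (a + c) = eps T a + eps T c.
Proof. by rewrite !epsE -big_split; apply: eq_bigr => k _; rewrite mxE mulrDr. Qed.

Lemma epsC (R : realType) n (T : {set 'I_n}) (a : 'rV[R]_n) :
  eps (~: T) a = - eps T a.
Proof. by rewrite /eps finset.setCK opprB. Qed.

Lemma sum_delta (R : realType) n (F : 'I_n -> R) (i : 'I_n) :
  \sum_k F k * (k == i)%:R = F i.
Proof.
rewrite (bigD1 i) //= eqxx mulr1 big1 ?addr0 // => k /negbTE ->; by rewrite mulr0.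
Qed.

Lemma chamber_neg (R : realType) n (f : weight R n -> R) (D : set (weight R n)) b0 :
  continuous f -> chamber D -> closure D b0 -> f b0 < 0 ->
  (forall b, Qreg b -> f b != 0) -> forall b, D b -> f b < 0.
Proof.
move=> cf [p Qp ->] cl fb0 nz b Db.
have [b1 [Db1 fb1]] : exists b1, connected_component (@Qreg R n) p b1 /\ f b1 < 0.
  have N : \forall y \near b0, f y < 0 by exact: (cvgr_lt _ (cf b0) 0 fb0).
  by case: (cl _ N) => y [Dy fy]; exists y.
rewrite ltNge; apply/negP => fb.
have C : connected [set f y | y in connected_component (@Qreg R n) p].
  apply: connected_continuous_connected; first exact: component_connected.
  exact: continuous_subspaceT.
move/connected_intervalP: C => iv.
have [y Dy fy0] : [set f y | y in connected_component (@Qreg R n) p] 0.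
  apply: (iv (f b1) (f b)); [by exists b1 | by exists b |].
  by rewrite fb (ltW fb1).
by move: (nz y (connected_component_sub Dy)); rewrite fy0 eqxx.
Qed.

Lemma Qreg_eps (R : realType) n (T : {set 'I_n}) (b : weight R n) :
  Qreg b -> eps T (alpha b) != 0.
Proof.
case=> Qb nw; apply/eqP => e; apply: (nw T); by split.
Qed.

Lemma chamber_sign (R : realType) n (T : {set 'I_n}) (D : set (weight R n)) b0 :
  chamber D -> closure D b0 ->
  (eps T (alpha b0) < 0 -> forall b, D b -> eps T (alpha b) < 0) /\
  (0 < eps T (alpha b0) -> forall b, D b -> 0 < eps T (alpha b)).
Proof.
move=> cD cl; split => h.
  apply: (@chamber_neg R n (fun b => eps T (alpha b)) D b0 (cont_eps R n T)) => //.
  by move=> b Qb; apply: Qreg_eps.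
move=> b Db; rewrite -oppr_lt0 -epsC.
apply: (@chamber_neg R n (fun b => eps (~: T) (alpha b)) D b0 (cont_eps R n (~: T))) => //.
  by rewrite epsC oppr_lt0.
by move=> c Qc; apply: Qreg_eps.
Qed.

From mathcomp Require Import lra.

Lemma sum_delta2 (R : realType) n (F : 'I_n -> R) (z : 'I_n) (w : R) :
  \sum_k F k * ((k == z)%:R * w) = F z * w.
Proof.
rewrite (bigD1 z) //= eqxx mul1r big1 ?addr0 // => k /negbTE ->; by rewrite mul0r mulr0.
Qed.

Lemma wall_pair (R : realType) n (S T : {set 'I_n}) (b0 : weight R n) (i j : 'I_n) :
  wall S b0 -> wall T b0 -> @wall R n T = @wall R n S -> i != j ->
  ((i \in T) == (j \in T)) = ((i \in S) == (j \in S)).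
Proof.
move=> [Qb eS] [_ eT] eW ij.
pose c : R := if (i \in S) == (j \in S) then -1 else 1.
pose m k := Num.min (b0.2 ord0 k - b0.1 ord0 k) (1 - b0.2 ord0 k).
have m_pos k : 0 < m k.
  by case: (Qb k) => h1 [h2 h3]; rewrite lt_min !subr_gt0 h2 h3.
have m1 k : m k <= b0.2 ord0 k - b0.1 ord0 k by rewrite ge_min lexx.
have m2 k : m k <= 1 - b0.2 ord0 k by rewrite ge_min lexx orbT.
pose e := Num.min (m i) (m j) / 2.
have mn_pos : 0 < Num.min (m i) (m j) by rewrite lt_min !m_pos.
have e_pos : 0 < e by rewrite divr_gt0.
have e_i : e < m i.
  have : Num.min (m i) (m j) <= m i by rewrite ge_min lexx.
  rewrite /e; lra.
have e_j : e < m j.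
  have : Num.min (m i) (m j) <= m j by rewrite ge_min lexx orbT.
  rewrite /e; lra.
pose d := \row_k ((k == i)%:R * e + (k == j)%:R * (c * e)) : 'rV[R]_n.
pose b' := (b0.1, b0.2 + d) : weight R n.
have ab : alpha b' = alpha b0 + d by rewrite /alpha /= addrAC.
have epsd U : eps U d = sg n R U i * e + sg n R U j * (c * e).
  rewrite epsE; under eq_bigr do rewrite mxE mulrDr.
  by rewrite big_split /= !sum_delta2.
have Qb' : Qspace b'.
  move=> k; rewrite /= /d !mxE; split; first by case: (Qb k).
  case: (eqVneq k i) => [->|ki].
    rewrite ?eqxx (negbTE ij) /= mul1r mul0r addr0.
    case: (Qb i) => h1 [h2 h3].
    have := e_i; have := m1 i; have := m2 i; have := e_pos; split; lra.
  case: (eqVneq k j) => [->|kj].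
    rewrite /= mul1r mul0r add0r.
    case: (Qb j) => h1 [h2 h3].
    have := e_j; have := m1 j; have := m2 j; have := e_pos; rewrite /c; case: ifP => _; split; lra.
  case: (Qb k) => h1 [h2 h3].
  rewrite ?(negbTE ki) ?(negbTE kj) !mul0r addr0; split; lra.
have wS : wall S b'.
  split => //; change (eps S (alpha b') = 0); rewrite ab epsD eS add0r epsd /c /sg.
  by case: (i \in S); case: (j \in S) => /=; lra.
have : wall T b' by rewrite eW.
clear wS; move: Qb'; clear eW Qb => Qb'.
case=> _; change (eps T (alpha b') = 0 -> (i \in T) == (j \in T) = ((i \in S) == (j \in S))); rewrite ab epsD eT add0r epsd /c /sg.
case: (i \in S); case: (j \in S); case: (i \in T); case: (j \in T) => //= h; exfalso; lra.
Qed.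

Lemma wall_eq (R : realType) n (S T : {set 'I_n}) (b0 : weight R n) :
  wall S b0 -> wall T b0 -> @wall R n T = @wall R n S -> T = S \/ T = ~: S.
Proof.
move=> wS wT eW.
have P := fun i j => @wall_pair R n S T b0 i j wS wT eW.
case: (pselect (exists i0, (i0 \in T) = (i0 \in S))) => [[i0 h0]|h].
  left; apply/setP => j; case: (eqVneq i0 j) => [<-//|ij].
  move: (P _ _ ij); rewrite h0.
  by case: (i0 \in S); case: (j \in T); case: (j \in S).
right; apply/setP => j; rewrite !inE.
by case: (j \in T) (j \in S) (fun e => h (ex_intro _ j e)) => [] [] // H; exfalso; apply: H.
Qed.

Lemma eqmx_rV (F : fieldType) (u w : 'rV[F]_2) :
  u != 0 -> w != 0 -> (u <= w)%MS -> (u == w)%MS.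
Proof.
move=> u0 w0 uw; apply/andP; split => //.
by rewrite -(mxrank_leqif_sup uw).2 !rank_rV u0 w0.
Qed.

Lemma eqmx_tr (F : fieldType) (a b f : 'rV[F]_2) :
  (a == f)%MS -> (b == f)%MS -> (a == b)%MS.
Proof.
move=> /eqmxP af /eqmxP bf; apply/eqmxP; exact: eqmx_trans af (eqmx_sym bf).
Qed.

Lemma quotE (R : realType) n (x : 'I_n -> complex R) (E : PHB x) v :
  quot_data E v = ~: sub_data E v.
Proof. by apply/setP => i; rewrite !inE. Qed.

Lemma sub_data_eq (R : realType) n (x : 'I_n -> complex R) (E : PHB x) u v :
  (u == v)%MS -> sub_data E u = sub_data E v.
Proof.
move=> uv; apply/setP => i; rewrite !inE.
apply/idP/idP => /eqmxP h; apply/eqmxP.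
  exact: eqmx_trans (eqmx_sym (eqmxP uv)) h.
exact: eqmx_trans (eqmxP uv) h.
Qed.

Theorem mainTheorem8 (R : realType) (n : nat) (x : 'I_n -> complex R)
    (x_inj : injective x)
    (b0 : weight R n) (S : {set 'I_n}) (Dp Dm : set (weight R n)) :
    wall S b0 ->
    (forall T : {set 'I_n}, wall T b0 -> @wall R n T = @wall R n S) ->
    chamber Dp -> chamber Dm ->
    closure Dp b0 -> closure Dm b0 ->
    (forall b, Dp b -> 0 < eps S (alpha b)) ->
    (forall b, Dm b -> eps S (alpha b) < 0) ->
    (forall E : PHB x,
        (forall b, Dm b -> stable b E) -> (forall b, Dp b -> ~ stable b E) ->
        exists v, nonsplit_ext E S v /\
          forall w, nonsplit_ext E S w -> (w == v)%MS) /\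
    (forall (E : PHB x) (v : 'rV[complex R]_2), nonsplit_ext E S v ->
        (forall b, Dm b -> stable b E) /\ (forall b, Dp b -> ~ stable b E)).
Proof.
move=> wS0 wallH cDp cDm clp clm posP negM.
have [p Dp_p] : exists p, Dp p.
  by case: cDp => r Qr ->; exists r; exact: connected_component_refl.
have [q Dm_q] : exists q, Dm q.
  by case: cDm => r Qr ->; exists r; exact: connected_component_refl.
have QDp : forall b, Dp b -> Qspace b.
  by case: cDp => r Qr -> b /connected_component_sub [].
have apos : forall (b : weight R n) k, Qspace b -> 0 < alpha b ord0 k.
  by move=> b k Qb; rewrite /alpha !mxE subr_gt0; case: (Qb k) => _ [].
have [s sS] : exists s, s \in S.
  case: (set_0Vmem S) => [S0|[s sS]]; last by exists s.
  exfalso; have := posP p Dp_p; rewrite S0 epsE.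
  have : \sum_k sg n R finset.set0 k * alpha p ord0 k <= 0.
    apply: sumr_le0 => k _; rewrite /sg inE mulN1r oppr_le0.
    exact/ltW/apos/QDp.
  by move=> a b; have := lt_le_trans b a; rewrite ltxx.
have Qb0 : Qspace b0 by case: wS0.
have eS0 : eps S (alpha b0) = 0 by case: wS0.
have key : forall T, T != S -> T != ~: S -> eps T (alpha b0) != 0.
  move=> T TS TC; apply/eqP => e0.
  have wT : wall T b0 by split.
  by case: (@wall_eq R n S T b0 wS0 wT (wallH T wT)) => h; [move: TS | move: TC]; rewrite h eqxx.
split.
- move=> E stM unstP.
  have ns := unstP p Dp_p.
  have [v [v0 [iv hv]]] : exists v, v != 0 /\ Defs.invariant E v /\
                            ~ (eps (sub_data E v) (alpha p) < 0).
    case: (pselect (exists v, v != 0 /\ Defs.invariant E v /\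
                            ~ (eps (sub_data E v) (alpha p) < 0))) => // H.
    exfalso; apply: ns => v v0 iv.
    case: (boolP (eps (sub_data E v) (alpha p) < 0)) => // hn; exfalso.
    by apply: H; exists v; split; [|split] => //; apply/negP.
  have sdS : sub_data E v = S.
    case: (eqVneq (sub_data E v) S) => // TS.
    case: (eqVneq (sub_data E v) (~: S)) => [TC|TC].
      by exfalso; apply: hv; rewrite TC epsC oppr_lt0; exact: posP.
    have := key _ TS TC; rewrite neq_lt => /orP [lt|gt]; exfalso.
      by apply: hv; exact: ((@chamber_sign R n (sub_data E v) Dp b0 cDp clp).1 lt p Dp_p).
    have h1 := (@chamber_sign R n (sub_data E v) Dm b0 cDm clm).2 gt q Dm_q.
    have h2 := stM q Dm_q v v0 iv.
    by have := lt_trans h1 h2; rewrite ltxx.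
  exists v; split.
    split => //; first by rewrite quotE sdS.
    move=> w [wv wq iw].
    have w0 : w != 0 by apply: contraNneq wv => ->; rewrite sub0mx.
    have sdw : sub_data E w = ~: S.
      apply/setP => i; rewrite !inE.
      case: (boolP (i \in S)) => iS /=.
        apply/negP => wf.
        have vf : (v == flag E i)%MS by move: iS; rewrite -sdS inE.
        by move: wv; rewrite (andP (eqmx_tr _ _ _ _ wf vf)).1.
      apply: eqmx_rV => //; first exact: flag_nz.
      by apply: wq; rewrite quotE sdS !inE.
    have := stM q Dm_q w w0 iw; rewrite sdw epsC oppr_lt0 => h.
    by have := negM q Dm_q; rewrite ltNge (ltW h).
  move=> w [w0 iw sdw _ _].
  have wf : (w == flag E s)%MS by move: sS; rewrite -sdw inE.
  have vf : (v == flag E s)%MS by move: sS; rewrite -sdS inE.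
  exact: eqmx_tr _ _ _ _ wf vf.
- move=> E v [v0 iv sdv qdv ns]; split.
    move=> b Db u u0 iu.
    case: (boolP (u <= v)%MS) => uv.
      by rewrite (sub_data_eq _ _ _ E _ _ (eqmx_rV _ _ _ u0 v0 uv)) sdv; exact: negM.
    have [i [iq nuf]] : exists i, i \in quot_data E v /\ ~ (u <= flag E i)%MS.
      case: (pselect (exists i, i \in quot_data E v /\ ~ (u <= flag E i)%MS)) => // H.
      exfalso; apply: (ns u); split => // i iq.
      case: (boolP (u <= flag E i)%MS) => // h; exfalso.
      by apply: H; exists i; split => //; apply/negP.
    have iS : i \notin S by move: iq; rewrite qdv inE.
    have iT : i \notin sub_data E u.
      by rewrite inE; apply/negP => /andP [] uf _.
    have disj : forall k, k \in sub_data E u -> k \notin S.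
      move=> k; rewrite inE => uf; apply/negP => kS.
      have vf : (v == flag E k)%MS by move: kS; rewrite -sdv inE.
      by move: uv; rewrite (andP (eqmx_tr _ _ _ _ uf vf)).1.
    have neg0 : eps (sub_data E u) (alpha b0) < 0.
      suff : eps (sub_data E u) (alpha b0) + eps S (alpha b0) < 0 by rewrite eS0 addr0.
      rewrite !epsE -big_split /= (bigD1 i) //=.
      have ai := apos b0 i Qb0.
      rewrite /sg (negbTE iT) (negbTE iS).
      have : \sum_(k | k != i) ((if k \in sub_data E u then 1 else -1) * alpha b0 ord0 k +
                 (if k \in S then 1 else -1) * alpha b0 ord0 k) <= 0.
        apply: sumr_le0 => k _.
        have ak := apos b0 k Qb0.
        case: (boolP (k \in sub_data E u)) => kT.
          by rewrite (negbTE (disj k kT)); lra.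
        by case: (k \in S); lra.
      lra.
    exact: ((@chamber_sign R n (sub_data E u) Dm b0 cDm clm).1 neg0 b Db).
  move=> b Db st; have := st v v0 iv; rewrite sdv => h.
  by have := posP b Db => h'; have := lt_trans h h'; rewrite ltxx.
Qed.
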